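(* Let $X$ be a regular Lusin space. Then every quasicontinuous function $f:X\to\mathbb{R}$ is of the first Baire class.
   Context: All spaces are assumed regular. A Hausdorff space $X$ is a Lusin space (in the sense of Kunen) if (a) every nowhere dense subset of $X$ is countable, (b) $X$ has at most countably many isolated points, and (c) $X$ is uncountable. A function $f:X\to Y$ is quasicontinuous if for every $x\in X$, every open $V\ni f(x)$ and every open $U\ni x$ there is a nonempty open $W\subseteq U$ with $f(W)\subseteq V$. A function $f:X\to\mathbb{R}$ is of the first Baire class if it is the pointwise limit of a sequence of continuous real-valued functions on $X$. *)

(* Defs.v *)
From HB Require Import structures.
From mathcomp Require Import all_boot all_order all_algebra.
From mathcomp Require Import all_classical all_reals all_analysis.
Set Implicit Arguments. Unset Strict Implicit. Unset Printing Implicit Defensive.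
Import Order.TTheory GRing.Theory Num.Theory numFieldNormedType.Exports.
Local Open Scope classical_set_scope.
Local Open Scope ring_scope.

Definition nowhere_dense (T : topologicalType) (A : set T) : Prop :=
  interior (closure A) = set0.

(* Lusin space in the sense of Kunen (Hausdorffness stated separately). *)
Definition lusin_space (T : topologicalType) : Prop :=
  [/\ (forall A : set T, nowhere_dense A -> countable A),
      countable (isolated [set: T]) &
      ~ countable [set: T]].

Definition quasicontinuous (T : topologicalType) (R : realType) (f : T -> R) : Prop :=
  forall (x : T) (V : set R) (U : set T),
    open V -> V (f x) -> open U -> U x ->
    exists W : set T, [/\ open W, W !=set0, W `<=` U & f @` W `<=` V].

Definition first_baire_class (T : topologicalType) (R : realType) (f : T -> R) : Prop :=
  exists g : nat -> T -> R,
    (forall n, continuous (g n)) /\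
    (forall x, (fun n => g n x) @ \oo --> f x).

(* Main.v *)
Require Import Defs.
From HB Require Import structures.
From mathcomp Require Import all_boot all_order all_algebra.
From mathcomp Require Import all_classical all_reals all_analysis.
From mathcomp Require Import lra.
Set Implicit Arguments. Unset Strict Implicit. Unset Printing Implicit Defensive.
Import Order.TTheory GRing.Theory Num.Theory numFieldNormedType.Exports.
Local Open Scope classical_set_scope.
Local Open Scope ring_scope.
Lemma countableU2 (U : Type) (A B : set U) :
  countable A -> countable B -> countable (A `|` B).
Proof.
move=> cA cB.
have -> : A `|` B = \bigcup_(b in [set: bool]) (if b then A else B).
  apply/seteqP; split => [x [Ax|Bx]|x [[] _ H]].
  - by exists true.
  - by exists false.
  - by left.
  - by right.
by apply: bigcup_countable => // -[].
Qed.

Lemma countable_sub (U : Type) (A B : set U) :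
  A `<=` B -> countable B -> countable A.
Proof. by move=> AB; apply: sub_countable; exact: subset_card_le. Qed.

Lemma countable_img (U V : Type) (g : U -> V) (A : set U) :
  countable A -> countable (g @` A).
Proof. by apply: sub_countable; exact: card_image_le. Qed.

Lemma countable_enum (I : Type) (i0 : I) (J : set I) :
  countable J -> exists e : nat -> I, J `<=` range e.
Proof.
move=> /pfcard_geP [->|/surjfunPex [e ->]]; first by exists (fun=> i0).
by exists e => _ [n _ <-]; exists n.
Qed.

Section general.
Context (T : topologicalType).
Hypothesis hT : hausdorff_space T.
Hypothesis cI : countable (isolated [set: T]).
Hypothesis nd : forall A : set T, nowhere_dense A -> countable A.
Variable x0 : T.

Lemma closed1 (x : T) : closed [set x].
Proof. exact/accessible_closed_set1/hausdorff_accessible. Qed.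

Lemma ccc (F : set (set T)) :
  (forall V, F V -> open V /\ V !=set0) ->
  (forall V W, F V -> F W -> V `&` W !=set0 -> V = W) -> countable F.
Proof.
move=> Fo Fd.
pose p V := xget x0 V.
have pV V : F V -> V (p V).
  by move=> FV; apply: xgetPex; have [_ [x Vx]] := Fo V FV; exists x.
pose Z := [set p V | V in F `&` [set V | ~ isolated [set: T] (p V)]].
have pinj : {in F &, injective p}.
  move=> V W /set_mem FV /set_mem FW pVW; apply: Fd => //.
  by exists (p V); split; [exact: pV|rewrite pVW; exact: pV].
have Znd : nowhere_dense Z.
  rewrite /nowhere_dense -subset0 => y; rewrite /interior nbhsE /=.
  move=> [G [oG Gy] GZ].
  have [_ [[V [FV nisoV] <-] Gz]] :=
    GZ y Gy G (open_nbhs_nbhs (conj oG Gy)).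
  apply: nisoV; split; first by rewrite in_setE.
  have [oV _] := Fo V FV.
  exists (G `&` V).
    by apply: open_nbhs_nbhs; split; [exact: openI|split => //; exact: pV].
  rewrite setIT; apply/seteqP; split => [w [Gw Vw]|w ->]; last first.
    by split => //; exact: pV.
  have [//|nw] := pselect (w = p V).
  have Wo : open (G `&` V `&` ~` [set p V]).
    by apply: openI; [exact: openI|apply: closed_openC; exact: closed1].
  have [_ [[V' [FV' _] <-] [[Gz' Vz'] nz']]] :=
    GZ w Gw _ (open_nbhs_nbhs (conj Wo (conj (conj Gw Vw) nw))).
  have VV' : V' = V.
    by apply: Fd => //; exists (p V'); split => //; exact: pV.
  by exfalso; apply: nz'; rewrite VV'.
have cpF : countable (p @` F).
  apply: (@countable_sub _ _ (isolated [set: T] `|` Z)); last first.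
    by apply: countableU2 => //; exact: nd.
  move=> _ [V FV <-]; have [iso|niso] := pselect (isolated [set: T] (p V)).
    by left.
  by right; exists V.
move/countable_injP : cpF => [h hinj].
apply/countable_injP; exists (h \o p) => V W FV FW /= hVW.
apply: pinj => //; apply: hinj => //; rewrite in_setE; [exists V|exists W] => //;
  exact/set_mem.
Qed.

Lemma lindelof (I : Type) (U : I -> set T) : (forall i, open (U i)) ->
  exists J : set I, countable J /\
    \bigcup_(i in J) U i = \bigcup_(i in [set: I]) U i.
Proof.
move=> oU.
pose P := [set F : set (set T) |
  (forall V, F V -> open V /\ V !=set0 /\ exists i, V `<=` U i) /\
  (forall V W, F V -> F W -> V `&` W !=set0 -> V = W)].
have [M [[PM1 PM2] Mmax]] : exists M, P M /\ forall B, M `<` B -> ~ P B.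
  apply: Zorn_bigcup => C CP Ctot; split.
  - by move=> V [A CA AV]; exact: (CP A CA).1.
  - move=> V W [A CA AV] [B CB BW].
    case: (Ctot A B CA CB) => [AB|BA].
    + exact: (CP B CB).2 V W (AB _ AV) BW.
    + exact: (CP A CA).2 V W AV (BA _ BW).
have cM : countable M.
  apply: ccc => [V MV|]; last exact: PM2.
  by have [? [? _]] := PM1 V MV.
pose W := \bigcup_(V in M) V.
have oW : open W by apply: bigcup_open => V MV; have [] := PM1 V MV.
pose O := \bigcup_(i in [set: I]) U i.
have ndOW : nowhere_dense (O `\` W).
  rewrite /nowhere_dense -subset0 => y; rewrite /interior nbhsE /=.
  move=> [G [oG Gy] GC].
  have [z [[[i _ Uiz] nWz] Gz]] := GC y Gy G (open_nbhs_nbhs (conj oG Gy)).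
  pose V' := G `&` U i.
  have V'W V : M V -> V' `&` V = set0.
    move=> MV; apply/seteqP; split => // w [[Gw _] Vw].
    have [u [[_ nWu] Wu]] :=
      GC w Gw W (open_nbhs_nbhs (conj oW (ex_intro2 _ _ V MV Vw))).
    by apply: nWu.
  apply: (Mmax (M `|` [set V'])).
    split; first by move=> V MV; left.
    move=> /(_ V' (or_intror erefl)) MV'.
    have := V'W V' MV'; rewrite setIid => V'0.
    by have : V' z by []; rewrite V'0.
  split.
  - move=> V [MV|->]; first exact: PM1.
    split; first by apply: openI => //.
    by split; [exists z|exists i; exact: subIsetr].
  - move=> V1 V2 [MV1|->] [MV2|->] ne.
    + exact: PM2.
    + by move: ne; rewrite setIC V'W // => /set0P; rewrite eqxx.
    + by move: ne; rewrite V'W // => /set0P; rewrite eqxx.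
    + by [].
have cOW := nd ndOW.
have [[i0 _]|noI] := pselect (exists i : I, True); last first.
  exists set0; split => //; rewrite bigcup_set0.
  by apply/seteqP; split => // x [i]; exfalso; apply: noI; exists i.
have /choice [iV HiV] : forall V, exists i, M V -> V `<=` U i.
  move=> V; have [MV|nMV] := pselect (M V); last by exists i0.
  by have [_ [_ [i Hi]]] := PM1 V MV; exists i.
have /choice [ix Hix] : forall x, exists i, O x -> U i x.
  move=> x; have [[i _ Uix]|nO] := pselect (O x); last by exists i0.
  by exists i.
exists (iV @` M `|` ix @` (O `\` W)); split.
  by apply: countableU2; apply: countable_img.
apply/seteqP; split => [x [i _ Uix]|x Ox]; first by exists i.
have [[V MV Vx]|nWx] := pselect (W x).
  by exists (iV V); [left; exists V|exact: HiV].
by exists (ix x); [right; exists x|exact: Hix].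
Qed.

End general.

Section reg.
Context (T : topologicalType).
Hypothesis hreg : regular_space T.
Hypothesis lind : forall (I : Type) (U : I -> set T), (forall i, open (U i)) ->
  exists J : set I, countable J /\
    \bigcup_(i in J) U i = \bigcup_(i in [set: I]) U i.

Lemma reg_sep (x : T) (B : set T) : closed B -> ~ B x ->
  exists U, [/\ open U, U x & closure U `&` B = set0].
Proof.
move=> cB nBx.
have [U [V [oU oV Ux BV UV]]] := (regular_openP x).1 (@hreg x) B cB nBx.
exists U; split => //.
have sub : closure U `<=` ~` V.
  rewrite [X in _ `<=` X](closure_id _).1; last exact: open_closedC.
  apply: closureS => u Uu Vu.
  by have : (U `&` V) u by []; rewrite UV.
by apply/seteqP; split => // y [cUy By]; exact: sub y cUy (BV y By).
Qed.

Lemma cover_closed (A B : set T) : closed A -> closed B -> A `&` B = set0 ->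
  exists a : nat -> set T, (forall n, open (a n)) /\
    (forall n, closure (a n) `&` B = set0) /\ A `<=` \bigcup_(n in [set: nat]) a n.
Proof.
move=> cA cB AB.
have /choice [Ux HUx] : forall x, exists U,
    open U /\ (A x -> U x) /\ closure U `&` B = set0.
  move=> x; have [Ax|nAx] := pselect (A x); last first.
    by exists set0; rewrite closure0 set0I; split => //; exact: open0.
  have nBx : ~ B x by move=> Bx; have : (A `&` B) x by []; rewrite AB.
  by have [U [oU Ux UB]] := reg_sep cB nBx; exists U.
pose F (o : option T) := if o is Some x then Ux x else ~` A.
have oF o : open (F o).
  by case: o => [x|] /=; [exact: (HUx x).1|exact: closed_openC].
have [J [cJ HJ]] := lind oF.
have [e He] := countable_enum None cJ.
exists (fun n => if e n is Some x then Ux x else set0); split; [|split].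
- by move=> n; case: (e n) => [x|]; [exact: (HUx x).1|exact: open0].
- by move=> n; case: (e n) => [x|]; [exact: (HUx x).2.2|rewrite closure0 set0I].
- move=> y Ay.
  have : (\bigcup_(i in [set: option T]) F i) y.
    by exists (Some y) => //; exact: (HUx y).2.1.
  rewrite -HJ => -[[x|] Jo Fy] //.
  by have [n _ en] := He _ Jo; exists n => //=; rewrite en.
Qed.

Lemma normal_sep (A B : set T) : closed A -> closed B -> A `&` B = set0 ->
  exists U V, [/\ open U, open V, A `<=` U, B `<=` V & U `&` V = set0].
Proof.
move=> cA cB AB.
have [a [oa [ca Aa]]] := cover_closed cA cB AB.
have [b [ob [cb Bb]]] := cover_closed cB cA ltac:(by rewrite setIC).
pose cl (c : nat -> set T) n := \bigcup_(k in `I_n.+1) closure (c k).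
have clc c n : closed (cl c n).
  by apply: closed_bigcup => // k _; exact: closed_closure.
exists (\bigcup_(n in [set: nat]) (a n `&` ~` cl b n)),
       (\bigcup_(n in [set: nat]) (b n `&` ~` cl a n)); split.
- by apply: bigcup_open => n _; apply: openI => //; exact: closed_openC.
- by apply: bigcup_open => n _; apply: openI => //; exact: closed_openC.
- move=> y Ay; have [n _ any] := Aa y Ay; exists n => //; split => //.
  move=> [k _ cky].
  by have : (closure (b k) `&` A) y by []; rewrite cb.
- move=> y By; have [n _ bny] := Bb y By; exists n => //; split => //.
  move=> [k _ cky].
  by have : (closure (a k) `&` B) y by []; rewrite ca.
- apply/seteqP; split => // y [[n _ [any ncb]] [m _ [bmy nca]]].
  case: (leqP n m) => nm.
    by apply: nca; exists n; [rewrite /= ltnS|exact: subset_closure].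
  by apply: ncb; exists m; [rewrite /= ltnS ltnW|exact: subset_closure].
Qed.

Lemma perfect (O : set T) : open O -> exists C : nat -> set T,
  (forall n, closed (C n)) /\ (forall n m, (n <= m)%N -> C n `<=` C m) /\
  \bigcup_(n in [set: nat]) C n = O.
Proof.
move=> oO.
have /choice [Vx HVx] : forall x, exists V,
    open V /\ (O x -> V x) /\ closure V `<=` O.
  move=> x; have [Ox|nOx] := pselect (O x); last first.
    by exists set0; rewrite closure0; split; [exact: open0|split => // /nOx].
  have cO : closed (~` O) by exact: open_closedC.
  have [V [oV Vx VO]] := reg_sep cO (fun h => h Ox).
  exists V; split => //; split => // y cVy; apply: contrapT => nOy.
  by have : (closure V `&` ~` O) y by []; rewrite VO.
pose F (o : option T) := if o is Some x then Vx x else set0.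
have oF o : open (F o).
  by case: o => [x|] /=; [exact: (HVx x).1|exact: open0].
have [J [cJ HJ]] := lind oF.
have [e He] := countable_enum None cJ.
pose G k := if e k is Some x then closure (Vx x) else set0.
exists (fun n => \bigcup_(k in `I_n.+1) G k); split; [|split].
- move=> n; apply: closed_bigcup => // k _; rewrite /G.
  by case: (e k) => [x|]; [exact: closed_closure|exact: closed0].
- move=> n m nm y [k /= kn Gy]; exists k => //=.
  by rewrite (leq_trans kn) // ltnS.
apply/seteqP; split.
  move=> y [n _ [k _]]; rewrite /G; case: (e k) => [x|] //.
  exact: (HVx x).2.2.
move=> y Oy.
have : (\bigcup_(i in [set: option T]) F i) y.
  by exists (Some y) => //; exact: (HVx y).2.1.
rewrite -HJ => -[[x|] Jo Fy] //.
have [k _ ek] := He _ Jo.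
exists k => //; exists k => //=; rewrite /G ek; exact: subset_closure.
Qed.

End reg.

Fixpoint mx (R : realType) (h : nat -> R) (n : nat) : R :=
  if n is n'.+1 then Num.max (mx h n') (h n) else h 0%N.

Lemma mx_ge (R : realType) (h : nat -> R) n k : (k <= n)%N -> h k <= mx h n.
Proof.
elim: n => [|n IH]; first by rewrite leqn0 => /eqP ->.
rewrite leq_eqVlt => /orP[/eqP ->|]; first by rewrite /= le_max lexx orbT.
by rewrite ltnS => /IH h1; rewrite /= le_max h1.
Qed.

Lemma mx_lt (R : realType) (h : nat -> R) n b :
  (forall k, (k <= n)%N -> h k < b) -> mx h n < b.
Proof.
elim: n => [|n IH] H; first exact: H.
rewrite /= gt_max IH ?H // => k kn; apply: H; exact: leqW.
Qed.

Lemma mx_cont (X : topologicalType) (R : realType) (H : nat -> X -> R) n :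
  (forall k, continuous (H k)) -> continuous (fun x => mx (fun k => H k x) n).
Proof.
move=> cH; elim: n => [|n IH] /=; first exact: cH.
move=> x; apply: (@continuous_max R X (fun x => mx (fun k => H k x) n) (H n.+1)); [exact: IH|exact: cH].
Qed.

Section main.
Context (X : topologicalType) (R : realType).
Hypothesis hX : hausdorff_space X.
Hypothesis rX : regular_space X.
Hypothesis lX : lusin_space X.
Variable f : X -> R.
Hypothesis qf : quasicontinuous f.

Definition Aosc (m : nat) := [set x : X | forall U, nbhs x U ->
  exists y z, [/\ U y, U z & m.+1%:R^-1 <= `|f y - f z|]].

Lemma Aosc_nd m : nowhere_dense (Aosc m).
Proof.
rewrite /nowhere_dense -subset0 => x; rewrite /interior nbhsE /=.
move=> [G [oG Gx] GA].
pose e : R := m.+1%:R^-1.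
have e0 : 0 < e by rewrite /e invr_gt0 ltr0n.
have e40 : 0 < e / 4 by rewrite divr_gt0.
have [W [oW [w Ww] WG fW]] := qf (ball_open (f x) (e / 4)) (ballxx (f x) e40) oG Gx.
have [a [Aa Wa]] := GA w (WG w Ww) W (open_nbhs_nbhs (conj oW Ww)).
have [y [z [Wy Wz yz]]] := Aa W (open_nbhs_nbhs (conj oW Wa)).
have := fW (f y) (imageP _ Wy); rewrite /ball /= => hy.
have := fW (f z) (imageP _ Wz); rewrite /ball /= => hz.
have := ler_normD (f y - f x) (f x - f z).
rewrite addrA subrK => h.
rewrite distrC in hy.
have : `|f y - f z| < e by lra.
by rewrite ltNge yz.
Qed.


Let ndX : forall A : set X, nowhere_dense A -> countable A.
Proof. by case: lX. Qed.
Let cIX : countable (isolated [set: X]).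
Proof. by case: lX. Qed.

Lemma exX : exists x : X, True.
Proof.
case: lX => _ _ nc; apply: contrapT => nx; apply: nc.
have -> : [set: X] = set0.
  by apply/seteqP; split => // x _; apply: nx; exists x.
exact: countable0.
Qed.

Let x0 : X := projT1 (cid exX).

Let lindX := lindelof hX cIX ndX x0.

Lemma normalX : normal_space X.
Proof. exact: (@normal_openP R X).2 (normal_sep rX lindX). Qed.

Definition Dset := \bigcup_(m in [set: nat]) Aosc m.

Lemma Dset_countable : countable Dset.
Proof. by apply: bigcup_countable => // m _; apply: ndX; exact: Aosc_nd. Qed.

Lemma near_f x : ~ Dset x -> forall e, 0 < e ->
  nbhs x [set y | `|f y - f x| < e].
Proof.
move=> Dx e e0.
have [N _ HN] := near_infty_natSinv_lt (PosNum e0).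
have hm := HN N (leqnn N); rewrite /= in hm.
have nA : ~ Aosc N x by move=> h; apply: Dx; exists N.
apply: contrapT => nU; apply: nA => U Ux.
apply: contrapT => nyz; apply: nU.
have Ux0 := nbhs_singleton Ux.
apply: filterS Ux => y Uy /=; rewrite ltNge; apply/negP => hy; apply: nyz.
exists y, x; split => //.
apply: le_trans hy; exact: ltW.
Qed.

Lemma gt_interior t :
  [set x | t < f x] `<=` interior [set x | t < f x] `|` Dset.
Proof.
move=> x /= tx; have [Dx|nDx] := pselect (Dset x); first by right.
left; rewrite /interior /=.
have e0 : 0 < f x - t by rewrite subr_gt0.
apply: filterS (near_f nDx e0) => y /=.
rewrite ltr_norml => /andP[h1 h2]; lra.
Qed.

Lemma lt_interior t :
  [set x | f x < t] `<=` interior [set x | f x < t] `|` Dset.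
Proof.
move=> x /= tx; have [Dx|nDx] := pselect (Dset x); first by right.
left; rewrite /interior /=.
have e0 : 0 < t - f x by rewrite subr_gt0.
apply: filterS (near_f nDx e0) => y /=.
rewrite ltr_norml => /andP[h1 h2]; lra.
Qed.

Lemma fsigma (S : set X) : S `<=` interior S `|` Dset ->
  exists P : nat -> set X, (forall n, closed (P n)) /\
    (forall n m, (n <= m)%N -> P n `<=` P m) /\
    (forall n, P n `<=` S) /\ S `<=` \bigcup_(n in [set: nat]) P n.
Proof.
move=> SD.
have [C [cC [mC UC]]] := perfect rX lindX (@open_interior _ S).
have [e He] := countable_enum x0 Dset_countable.
pose P n := C n `|` \bigcup_(k in [set k | (k < n.+1)%N /\ S (e k)]) [set e k].
exists P; split; [|split; [|split]].
- move=> n; apply: closedU => //.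
  apply: closed_bigcup => [|k _]; last exact: closed1.
  by apply: (@sub_finite_set _ _ `I_n.+1) => // k [].
- move=> n m nm y [Cy|[k [kn Sk] ->]]; first by left; exact: mC Cy.
  by right; exists k => //; split => //; rewrite (leq_trans kn) // ltnS.
- move=> n y [Cy|[k [kn Sk] ->]] //.
  by apply: interior_subset; rewrite -UC; exists n.
move=> y Sy; have [iy|Dy] := SD y Sy.
  by rewrite -UC in iy; case: iy => n _ Cy; exists n => //; left.
have [k _ ek] := He y Dy.
by exists k => //; right; exists k => //; split => //; rewrite ek.
Qed.


Theorem main_baire : first_baire_class f.
Proof.
have /choice [Pf HPf] : forall t : R, exists P : nat -> set X,
    (forall n, closed (P n)) /\ (forall n m, (n <= m)%N -> P n `<=` P m) /\
    (forall n, P n `<=` [set x | t < f x]) /\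
    [set x | t < f x] `<=` \bigcup_(n in [set: nat]) P n.
  by move=> t; exact: fsigma (@gt_interior t).
have /choice [Qf HQf] : forall t : R, exists P : nat -> set X,
    (forall n, closed (P n)) /\ (forall n m, (n <= m)%N -> P n `<=` P m) /\
    (forall n, P n `<=` [set x | f x < t]) /\
    [set x | f x < t] `<=` \bigcup_(n in [set: nat]) P n.
  by move=> t; exact: fsigma (@lt_interior t).
pose r k : R := ratr (odflt 0%Q (unpickle k)).
have rsurj (q : rat) : r (pickle q) = ratr q by rewrite /r pickleK.
pose Tset k n := \bigcup_(i in [set i | (i < n.+1)%N /\ r i <= r k]) Qf (r i) n.
have cT k n : closed (Tset k n).
  apply: closed_bigcup => [|i _]; last exact: (HQf _).1.
  by apply: (@sub_finite_set _ _ `I_n.+1) => // i [].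
have TP k n : Tset k n `&` Pf (r k) n = set0.
  apply/seteqP; split => // x [[i [_ rik] Qx] Px].
  have := (HQf (r i)).2.2.1 n x Qx; have := (HPf (r k)).2.2.1 n x Px.
  by rewrite /= => h1 h2; lra.
have sep k n : uniform_separator (Tset k n) (Pf (r k) n).
  exact: (@normal_separatorP R X).1 normalX _ _ (cT k n) ((HPf _).1 n) (TP k n).
pose phi n k := @Urysohn X R (Tset k n) (Pf (r k) n).
have phi01 n k x : 0 <= phi n k x <= 1.
  have := @Urysohn_range X R (Tset k n) (Pf (r k) n) (phi n k x) (imageT _ x).
  by rewrite /= in_itv.
have phi1 n k x : Pf (r k) n x -> phi n k x = 1.
  by move=> h; exact: (Urysohn_sub1 (sep k n) (imageP _ h)).
have phi0 n k x : Tset k n x -> phi n k x = 0.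
  by move=> h; exact: (Urysohn_sub0 (sep k n) (imageP _ h)).
pose H n k x := r k - (`|r k| + n%:R) * (1 - phi n k x).
exists (fun n x => mx (fun k => H n k x) n); split.
  move=> n; apply: mx_cont => k x; rewrite /H.
  apply: cvgB; first exact: cvg_cst.
  apply: cvgM; first exact: cvg_cst.
  apply: cvgB; first exact: cvg_cst.
  exact: Urysohn_continuous.
move=> x; apply/cvgrPdist_lt => e e0.
have [q0 q0in] : exists q, ratr q \in `](f x - e), f x[.
  by apply: rat_in_itvoo; lra.
have [q1 q1in] : exists q, ratr q \in `](f x), (f x + e)[.
  by apply: rat_in_itvoo; lra.
move: q0in q1in; rewrite !in_itv /= => /andP[q0a q0b] /andP[q1a q1b].
pose k0 := pickle q0; pose k1 := pickle q1.
have [N0 _ PN0] := (HPf (r k0)).2.2.2 x ltac:(by rewrite /= rsurj).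
have [N1 _ QN1] := (HQf (r k1)).2.2.2 x ltac:(by rewrite /= rsurj).
pose N2 := (Num.truncn (`|f x| + e)).+1.
have hN2 : `|f x| + e < N2%:R by exact: truncnS_gt.
exists (maxn (maxn k0 k1) (maxn (maxn N0 N1) N2)) => // n /= hn.
have hk0 : (k0 <= n)%N by apply: leq_trans hn; rewrite !leq_max leqnn.
have hk1 : (k1 <= n)%N by apply: leq_trans hn; rewrite !leq_max leqnn orbT.
have hn0 : (N0 <= n)%N by apply: leq_trans hn; rewrite !leq_max leqnn !orbT.
have hn1 : (N1 <= n)%N by apply: leq_trans hn; rewrite !leq_max leqnn !orbT.
have hn2 : (N2 <= n)%N by apply: leq_trans hn; rewrite !leq_max leqnn !orbT.
have hn2' : N2%:R <= n%:R :> R by rewrite ler_nat.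
have lo : f x - e < mx (fun k => H n k x) n.
  apply: (lt_le_trans _ (mx_ge _ hk0)).
  rewrite /H phi1; last exact: (HPf (r k0)).2.1 N0 n hn0 x PN0.
  by rewrite subrr mulr0 subr0 /k0 rsurj.
have up : mx (fun k => H n k x) n < f x + e.
  apply: mx_lt => k kn; rewrite /H.
  have := phi01 n k x; move=> /andP[p0 p1].
  have rk := ler_norm (r k).
  have n0 : 0 <= n%:R :> R by [].
  have [rkk1|rk1k] := ltP (r k) (r k1).
    have : 0 <= (`|r k| + n%:R) * (1 - phi n k x).
      by apply: mulr_ge0; [apply: addr_ge0|rewrite subr_ge0].
    move: rkk1; rewrite /k1 rsurj => ? ?; lra.
  rewrite phi0; last first.
    exists k1; first by split => //; rewrite ltnS.
    exact: (HQf (r k1)).2.1 N1 n hn1 x QN1.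
  rewrite subr0 mulr1.
  have fxa : - f x <= `|f x| by rewrite -normrN ler_norm.
  lra.
rewrite distrC ltr_norml; apply/andP; split; lra.
Qed.

End main.

Theorem proposition3p4' (X : topologicalType) (R : realType) :
  hausdorff_space X -> regular_space X -> lusin_space X ->
  forall f : X -> R, quasicontinuous f -> first_baire_class f.
Proof. by move=> hX rX lX f qf; exact: main_baire. Qed.



Unset Implicit Arguments.

Theorem proposition3p4 (X : topologicalType) (R : realType) :
  hausdorff_space X -> regular_space X -> lusin_space X ->
  forall f : X -> R, quasicontinuous f -> first_baire_class f.
Proof. exact: proposition3p4'. Qed.
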